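(* Let $k$ be a positive integer and let $D$ be a digraph with no isolated vertex. Then $\gamma_{trk}(D)\le (k+1)\gamma(D)$. Moreover, if $\gamma_{trk}(D)=(k+1)\gamma(D)$, then every $\gamma(D)$-set is a packing in $D$.
   Context: All digraphs are finite, with no loops or multiple arcs (pairs of opposite arcs are allowed). For a vertex $v$, $N^-(v)$ and $N^+(v)$ denote its sets of in-neighbors and out-neighbors, and $N^+[v]=N^+(v)\cup\{v\}$; for $X\subseteq V(D)$, $N^+[X]=\bigcup_{v\in X}N^+[v]$. A vertex is isolated if it has no in-neighbor and no out-neighbor. For a positive integer $k$, a $k$-rainbow dominating function ($k$RDF) on $D$ is a function $f:V(D)\to\mathcal P(\{1,\dots,k\})$ such that every vertex $v$ with $f(v)=\emptyset$ satisfies $\bigcup_{u\in N^-(v)}f(u)=\{1,\dots,k\}$. Its weight is $\omega(f)=\sum_{v\in V(D)}|f(v)|$. If $D$ has no isolated vertex, a total $k$-rainbow dominating function (T$k$RDF) on $D$ is a $k$RDF $f$ such that the subdigraph of $D$ induced by $\{v: f(v)\neq\emptyset\}$ has no isolated vertex; $\gamma_{trk}(D)$ is the minimum weight of a T$k$RDF on $D$. A set $S\subseteq V(D)$ is a dominating set if $N^+[S]=V(D)$; $\gamma(D)$ is the minimum size of a dominating set, and a dominating set of size $\gamma(D)$ is a $\gamma(D)$-set. A set $S$ is a packing if $N^+[u]\cap N^+[v]=\emptyset$ for all distinct $u,v\in S$. *)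

(* Defs.v *)
From mathcomp Require Import all_boot.
Set Implicit Arguments. Unset Strict Implicit. Unset Printing Implicit Defensive.

(* A digraph on a finite vertex type T is given by its arc relation a:
   [a u v] means there is an arc u -> v.
   Pairs of opposite arcs are allowed; multiple arcs do not exist. *)
Definition loopless (T : finType) (a : rel T) : Prop := forall v, ~~ a v v.

Section Digraph.
Variables (T : finType) (a : rel T).

Definition out_nb (v : T) : {set T} := [set u | a v u].
Definition in_nb (v : T) : {set T} := [set u | a u v].
Definition closed_out_nb (v : T) : {set T} := v |: out_nb v.
Definition closed_out_nbS (X : {set T}) : {set T} :=
  \bigcup_(v in X) closed_out_nb v.

Definition isolated (v : T) : bool := (in_nb v == set0) && (out_nb v == set0).
Definition no_isolated : Prop := forall v, ~~ isolated v.

(* Colours {1,...,k} are represented by 'I_k. *)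
Definition is_kRDF (k : nat) (f : {ffun T -> {set 'I_k}}) : bool :=
  [forall v, (f v == set0) ==> (\bigcup_(u in in_nb v) f u == [set: 'I_k])].

Definition weight (k : nat) (f : {ffun T -> {set 'I_k}}) : nat :=
  \sum_(v : T) #|f v|.

Definition support (k : nat) (f : {ffun T -> {set 'I_k}}) : {set T} :=
  [set v | f v != set0].

Definition induced_no_isolated (S : {set T}) : bool :=
  [forall v in S, exists u in S, a u v || a v u].

Definition is_TkRDF (k : nat) (f : {ffun T -> {set 'I_k}}) : bool :=
  is_kRDF f && induced_no_isolated (support f).

(* minimum weight of a TkRDF; the default (k*|V|).+1 exceeds every weight
   and is only reached if no TkRDF exists (impossible without isolated
   vertices: the constant function [set: 'I_k] is a TkRDF). *)
Definition gamma_trk (k : nat) : nat :=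
  \big[minn/(k * #|T|).+1]_(f : {ffun T -> {set 'I_k}} | is_TkRDF f) weight f.

Definition is_dominating (S : {set T}) : bool := closed_out_nbS S == [set: T].

(* [set: T] is always dominating, so the default #|T| is harmless. *)
Definition gamma : nat := \big[minn/#|T|]_(S : {set T} | is_dominating S) #|S|.

Definition is_gamma_set (S : {set T}) : bool := is_dominating S && (#|S| == gamma).

Definition is_packing (S : {set T}) : Prop :=
  forall u v, u \in S -> v \in S -> u != v ->
    [disjoint closed_out_nb u & closed_out_nb v].
End Digraph.

(* Main.v *)
Require Import Defs.
From mathcomp Require Import all_boot.
Set Implicit Arguments. Unset Strict Implicit. Unset Printing Implicit Defensive.

Lemma bigmin_seq_le (I : eqType) (P : pred I) (F : I -> nat) x0 i r :
  i \in r -> P i -> \big[minn/x0]_(j <- r | P j) F j <= F i.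
Proof.
elim: r => // j r IH; rewrite inE big_cons => /orP [/eqP<- Pi| ir Pi].
  by rewrite Pi geq_minl.
case: ifP => _; last exact: IH.
by rewrite geq_min IH ?orbT.
Qed.

Lemma bigmin_le (I : finType) (P : pred I) (F : I -> nat) x0 i :
  P i -> \big[minn/x0]_(j | P j) F j <= F i.
Proof. by move=> Pi; apply: bigmin_seq_le => //; rewrite mem_index_enum. Qed.

Section Main.
Variables (T : finType) (a : rel T) (k : nat).
Hypothesis k0 : 0 < k.

Lemma construct (S W : {set T}) :
  is_dominating a S ->
  (forall w, w \in W -> w \notin S) ->
  (forall v, v \in S -> exists u, ((u \in S) || (u \in W)) && (a u v || a v u)) ->
  (forall w, w \in W -> exists u, (u \in S) && (a u w || a w u)) ->
  gamma_trk a k <= k * #|S| + #|W|.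
Proof.
move=> hdom hSW hS hW.
pose c0 : 'I_k := Ordinal k0.
pose f : {ffun T -> {set 'I_k}} :=
  [ffun v => if v \in S then [set: 'I_k] else if v \in W then [set c0] else set0].
have fS v : v \in S -> f v = [set: 'I_k] by rewrite ffunE => ->.
have fW v : v \in W -> f v = [set c0] by move=> vW; rewrite ffunE (negbTE (hSW v vW)) vW.
have f0 v : v \notin S -> v \notin W -> f v = set0.
  by move=> /negbTE vS /negbTE vW; rewrite ffunE vS vW.
have supp v : (f v != set0) = (v \in S) || (v \in W).
  case vS: (v \in S); first by rewrite fS //; apply/set0Pn; exists c0.
  case vW: (v \in W); first by rewrite fW //; apply/set0Pn; exists c0; rewrite inE.
  by rewrite f0 ?vS ?vW ?eqxx.
have hT : is_TkRDF a f.
  apply/andP; split.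
    apply/forallP => v; apply/implyP => /eqP fv.
    have : v \in closed_out_nbS a S by rewrite (eqP hdom) inE.
    case/bigcupP => s sS; rewrite /closed_out_nb !inE => /orP [/eqP vs|asv].
      by move: fv; rewrite vs fS // => /eqP; rewrite -cards_eq0 cardsT card_ord => /eqP kz; exfalso; move: (k0); by rewrite kz.
    apply/eqP/setP => c; rewrite inE; apply/bigcupP; exists s.
      by rewrite inE.
    by rewrite fS.
  apply/forallP => v; apply/implyP; rewrite inE supp => /orP [vS|vW].
    have [u /andP [hu huv]] := hS v vS.
    by apply/existsP; exists u; rewrite inE supp hu huv.
  have [u /andP [hu huv]] := hW v vW.
  by apply/existsP; exists u; rewrite inE supp hu huv.
apply: (leq_trans (bigmin_le _ _ hT)).
rewrite /weight.
have -> : \sum_(v : T) #|f v| = \sum_(v : T) (k * (v \in S) + (v \in W)).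
  apply: eq_bigr => v _.
  case vS: (v \in S).
    have vW: (v \in W) = false by apply/negP => /hSW; rewrite vS.
    by rewrite fS // vW cardsT card_ord muln1 addn0.
  case vW: (v \in W); first by rewrite fW ?vW // cards1 muln0.
  by rewrite f0 ?vS ?vW // cards0 muln0.
rewrite big_split /= -big_distrr /=.
have cnt (A : {set T}) : \sum_(i : T) ((i \in A) : nat) = #|A|.
  rewrite -sum1_card [RHS]big_mkcond; apply: eq_bigr => i _; by case: (i \in A).
by rewrite !cnt.
Qed.


Variable g : T -> T.
Hypothesis hg : forall v, a (g v) v || a v (g v).

Definition Bset (S : {set T}) := [set v in S | ~~ [exists u in S, a u v || a v u]].

Lemma key (S X Y : {set T}) :
  is_dominating a S -> X \subset Bset S ->
  (forall y, y \in Y -> (y \notin S) && [exists u in S, a u y || a y u]) ->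
  (forall v, v \in Bset S -> v \notin X -> exists2 y, y \in Y & (a y v || a v y)) ->
  gamma_trk a k <= k * #|S| + (#|X| + #|Y|).
Proof.
move=> hdom hX hY hB.
have gS x : x \in Bset S -> g x \notin S.
  rewrite inE => /andP [_ /existsPn hn]; apply/negP => gxS.
  by move: (hn (g x)); rewrite gxS /= hg.
apply: (@leq_trans (k * #|S| + #|(g @: X) :|: Y|)); last first.
  by rewrite leq_add2l (leq_trans (leq_card_setU _ _)) // leq_add2r leq_imset_card.
apply: (construct hdom).
- move=> w; rewrite inE => /orP [/imsetP [x xX ->]|wY].
    by apply: gS; apply: (subsetP hX).
  by case/andP: (hY w wY).
- move=> v vS.
  case vB: (v \in Bset S).
    case vX: (v \in X).
      by exists (g v); rewrite !inE imset_f ?orbT ?hg.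
    have [y yY hy] := hB v vB (negbT vX).
    by exists y; rewrite inE yY !orbT hy.
  move: vB; rewrite inE vS /= => /negbFE /existsP [u /andP [uS hu]].
  by exists u; rewrite uS hu.
- move=> w; rewrite inE => /orP [/imsetP [x xX ->]|wY].
    exists x; have := subsetP hX x xX; rewrite inE => /andP [-> _] /=.
    by rewrite orbC hg.
  by case/andP: (hY w wY) => _ /existsP [u hu]; exists u.
Qed.

End Main.

From mathcomp Require Import zify.

Theorem theorem2p1 (T : finType) (a : rel T) (k : nat) :
  0 < k -> loopless a -> no_isolated a ->
  gamma_trk a k <= k.+1 * gamma a /\
  (gamma_trk a k = k.+1 * gamma a ->
     forall S : {set T}, is_gamma_set a S -> is_packing a S).
Proof.
move=> k0 _ hni.
pose g v := odflt v [pick u | a u v || a v u].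
have hg v : a (g v) v || a v (g v).
  rewrite /g; case: pickP => [u -> //| hn]; exfalso.
  move: (hni v); rewrite /isolated; apply/negP; rewrite negbK.
  apply/andP; split; apply/eqP/setP => u; rewrite /in_nb /out_nb !inE;
    by move: (hn u); case: (a u v); case: (a v u).
have base S : is_dominating a S -> gamma_trk a k <= k * #|S| + #|Bset a S|.
  move=> hdom; rewrite -[#|Bset a S|]addn0 -(cards0 T).
  by apply: (key k0 hg hdom (subxx _)) => [y|v ->]; first by rewrite inE.
have BS S : #|Bset a S| <= #|S|.
  by apply: subset_leq_card; apply/subsetP => v; rewrite inE => /andP [].
split.
  rewrite /gamma; apply: (big_ind (fun m => gamma_trk a k <= k.+1 * m)).
  - have hT : is_dominating a [set: T].
      apply/eqP/setP => v; rewrite !inE; apply/bigcupP; exists v; rewrite !inE ?eqxx //.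
    by apply: (leq_trans (base _ hT)); have := BS [set: T]; rewrite cardsT; lia.
  - move=> x y hx hy; rewrite /minn; by case: ifP.
  - move=> S hS; apply: (leq_trans (base _ hS)).
    by have := BS S; lia.
move=> heq S /andP [hdom /eqP hc] u v hu hv huv.
rewrite disjoint_subset; apply/subsetP => x hxu; rewrite inE; apply/negP => hxv.
suff : gamma_trk a k < k.+1 * #|S| by rewrite heq hc ltnn.
have notB w : w \in S -> w \notin Bset a S -> gamma_trk a k < k.+1 * #|S|.
  move=> wS wB.
  have : #|Bset a S| <= #|S :\ w|.
    apply: subset_leq_card; apply/subsetP => z zB; rewrite !inE.
    rewrite (subsetP _ z zB) ?andbT; last by apply/subsetP => y; rewrite inE => /andP [].
    by apply/eqP => ezw; move: wB; rewrite -ezw zB.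
  move: (cardsD1 w S) (base S hdom); rewrite wS; lia.
have nbB w z : w \in Bset a S -> z \in S -> a w z || a z w -> False.
  rewrite inE => /andP [_ /existsPn hn] zS hz.
  by move: (hn z); rewrite zS /= orbC hz.
case uB: (u \in Bset a S); last by apply: (notB u) => //; rewrite uB.
case vB: (v \in Bset a S); last by apply: (notB v) => //; rewrite vB.
move: hxu hxv; rewrite /closed_out_nb /out_nb !inE.
case/orP => [/eqP exu|aux].
  rewrite exu; case/orP => [/eqP euv|avu]; first by rewrite euv eqxx in huv.
  by case: (nbB v u vB hu); rewrite avu.
case/orP => [/eqP exv|avx].
  by case: (nbB u v uB hv); rewrite -exv aux.
have xS : x \notin S.
  by apply/negP => xS; case: (nbB u x uB xS); rewrite aux.
have := key k0 hg (X := Bset a S :\ u :\ v) (Y := [set x]) hdom.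
rewrite cards1.
have hle : #|Bset a S :\ u :\ v| + 2 <= #|S|.
  move: (cardsD1 u (Bset a S)) (cardsD1 v (Bset a S :\ u)) (BS S).
  rewrite uB in_setD1 vB (eq_sym v u) huv /=; lia.
move=> H; apply: leq_ltn_trans (H _ _ _) _.
- by apply/subsetP => z; rewrite !inE => /andP [_ /andP [_ ->]].
- move=> y; rewrite inE => /eqP ->; rewrite xS /=.
  by apply/existsP; exists u; rewrite hu aux.
- move=> w wB; rewrite !in_setD1 wB !andbT negb_and !negbK => /orP [/eqP ->|/eqP ->].
    by exists x; rewrite ?inE // orbC avx.
  by exists x; rewrite ?inE // orbC aux.
- by rewrite mulSn [#|S| + _]addnC ltn_add2l addn1 -addn2.
Qed.
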